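(* If $Y\subseteq 2^\omega$ is consonant, then Alice has no winning strategy in the grouped Menger game played on $2^\omega\setminus Y$.
   Context: A $k$-cover of $X$ is an open cover such that every compact subset of $X$ is contained in a member of the cover. In the game $G_1(\mathcal K,\mathcal O)$ on $X$, in round $n$ Alice picks an open $k$-cover $\mathcal U_n$ of $X$ and Bob picks $U_n\in\mathcal U_n$; Bob wins if $\{U_n:n\in\omega\}$ covers $X$, otherwise Alice wins. $Y\subseteq 2^\omega$ is consonant iff Alice has no winning strategy in $G_1(\mathcal K,\mathcal O)$ played on $2^\omega\setminus Y$. Grouped Menger game on $X\subseteq 2^\omega$: in each round $n\in\omega$ Alice selects a natural number $l_n>0$ and then the players play $l_n$ subrounds of the Menger game, indexed by $i\in[L_n,L_{n+1})$ where $L_0=0$, $L_{n+1}=l_0+\dots+l_n$: in subround $i$ Alice picks an open cover $\mathcal U_i$ of $X$ and Bob picks a finite $\mathcal F_i\subseteq\mathcal U_i$. Bob wins if $X=\bigcup_{n\in\omega}\bigcap_{i\in[L_n,L_{n+1})}\bigcup\mathcal F_i$; otherwise Alice wins. *)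

(* Defs.v *)
From HB Require Import structures.
From mathcomp Require Import all_boot all_order all_algebra.
From mathcomp Require Import all_classical all_reals all_analysis.
Set Implicit Arguments. Unset Strict Implicit. Unset Printing Implicit Defensive.
Local Open Scope classical_set_scope.

(* Open subsets of a subspace X are represented by (traces of) open subsets
   of cantor_space; only their intersections with X matter in the games. *)
Notation C := cantor_space.

Definition open_cover (X : set C) (U : set (set C)) : Prop :=
  (forall V, U V -> open V) /\ X `<=` \bigcup_(V in U) V.

Definition k_cover (X : set C) (U : set (set C)) : Prop :=
  open_cover X U /\
  forall K : set C, K `<=` X -> compact K -> exists2 V, U V & K `<=` V.

Definition hist {A : Type} (f : nat -> A) (n : nat) : seq A :=
  [seq f i | i <- iota 0 n].

Definition G1KO_strategy (X : set C) (sigma : seq (set C) -> set (set C)) :=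
  forall h, k_cover X (sigma h).

Definition G1KO_winning (X : set C) (sigma : seq (set C) -> set (set C)) :=
  G1KO_strategy X sigma /\
  forall U : nat -> set C, (forall n, sigma (hist U n) (U n)) ->
    ~ (X `<=` \bigcup_n U n).

Definition Alice_wins_G1KO (X : set C) :=
  exists sigma, G1KO_winning X sigma.

Definition consonant (Y : set C) : Prop := ~ Alice_wins_G1KO (~` Y).

(* Alice's strategy: from Bob's previous moves F_0..F_{i-1} (finite families)
   it gives the length l_n > 0 of the next round (used when i = L_n) and
   the open cover U_i of the current subround. *)
Record gm_strategy := GMStrat {
  gm_len : seq (seq (set C)) -> nat;
  gm_cov : seq (seq (set C)) -> set (set C) }.

Definition gm_valid (X : set C) (s : gm_strategy) :=
  forall h, 0 < gm_len s h /\ open_cover X (gm_cov s h).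

Fixpoint gm_L (s : gm_strategy) (F : nat -> seq (set C)) (n : nat) : nat :=
  match n with
  | 0 => 0
  | n'.+1 => gm_L s F n' + gm_len s (hist F (gm_L s F n'))
  end.

Definition gm_legal (s : gm_strategy) (F : nat -> seq (set C)) :=
  forall i, forall V, V \in F i -> gm_cov s (hist F i) V.

Definition gm_Bob_wins (X : set C) (s : gm_strategy) (F : nat -> seq (set C)) :=
  X `<=` \bigcup_n \bigcap_(i in [set i | gm_L s F n <= i < gm_L s F n.+1]%N)
           \bigcup_(V in [set V | V \in F i]) V.

Definition Alice_wins_grouped_Menger (X : set C) :=
  exists s : gm_strategy, gm_valid X s /\
    forall F, gm_legal s F -> ~ gm_Bob_wins X s F.

(* Main.v *)
Require Import Defs.
From mathcomp Require Import all_boot all_classical all_reals all_analysis.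
Local Open Scope classical_set_scope.

Lemma fin_sub (K : set C) (U : set (set C)) :
  compact K -> (forall V, U V -> open V) -> K `<=` \bigcup_(V in U) V ->
  exists F : seq (set C), (forall V, V \in F -> U V) /\
     K `<=` \bigcup_(V in [set V | V \in F]) V.
Proof.
rewrite compact_cover => cK oU KU.
have [D' sD' KD] := cK _ U id oU KU.
exists (finmap.enum_fset D'); split.
  by move=> V VD; apply: set_mem; apply: sD'; exact: VD.
by move=> x /KD [V VD Vx]; exists V.
Qed.

Definition hseq := seq (seq (set C)).

Definition legal_round (s : gm_strategy) (H P : hseq) :=
  size P = gm_len s H /\
  forall j, (j < size P)%N -> forall V, V \in nth [::] P j -> gm_cov s (H ++ take j P) V.

Fixpoint outc (P : hseq) : set C :=
  match P with
  | [::] => setT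
  | F :: P' => (\bigcup_(V in [set V | V \in F]) V) `&` outc P'
  end.

Lemma outcP P x : outc P x <->
  forall j, (j < size P)%N -> exists2 V, V \in nth [::] P j & V x.
Proof.
elim: P => [|F P IH] /=; first by split.
split.
  move=> [[V VF Vx] /IH H] [|j] /= jlt; first by exists V.
  exact: H.
move=> H; split.
  by have [V VF Vx] := H 0%N isT; exists V.
by apply/IH => j jlt; apply: (H j.+1).
Qed.

Lemma outc_open P : (forall j, (j < size P)%N -> forall V, V \in nth [::] P j -> open V) ->
  open (outc P).
Proof.
elim: P => [|F P IH] /= H; first exact: openT.
apply: openI.
  by apply: bigcup_open => V VF; apply: (H 0%N).
by apply: IH => j jlt; apply: (H j.+1).
Qed.

Lemma round_exists X s (K : set C) : gm_valid X s -> compact K -> K `<=` X ->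
  forall m H, exists P : hseq, [/\ size P = m,
    (forall j, (j < size P)%N -> forall V, V \in nth [::] P j -> gm_cov s (H ++ take j P) V) &
    (forall j, (j < size P)%N -> K `<=` \bigcup_(V in [set V | V \in nth [::] P j]) V)].
Proof.
move=> sv cK KX; elim=> [|m IH] H; first by exists [::].
have [_ [oc cov]] := sv H.
have [F0 [F0U KF0]] := fin_sub _ _ cK oc (subset_trans KX cov).
have [P [sP lP cP]] := IH (rcons H F0).
exists (F0 :: P); split => /=; first by rewrite sP.
  move=> [|j] jlt V; first by rewrite take0 cats0; apply: F0U.
  by move=> VP /=; rewrite -cat_rcons; apply: lP.
by move=> [|j] //= jlt; apply: cP.
Qed.

Definition pickP (s : gm_strategy) (H : hseq) (W : set C) : hseq :=
  match pselect (exists P, legal_round s H P /\ outc P = W) with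
  | left e => projT1 (cid e)
  | right _ => [::]
  end.

Lemma pickPP s H W : (exists P, legal_round s H P /\ outc P = W) ->
   legal_round s H (pickP s H W) /\ outc (pickP s H W) = W.
Proof. by move=> e; rewrite /pickP; case: pselect => [e'|//]; exact: projT2 (cid e'). Qed.

Fixpoint Dseq s (U : nat -> set C) n : hseq :=
  match n with
  | 0 => [::]
  | n'.+1 => Dseq s U n' ++ pickP s (Dseq s U n') (U n')
  end.

Lemma Dseq_ext s U U' n : (forall i, (i < n)%N -> U i = U' i) -> Dseq s U n = Dseq s U' n.
Proof.
elim: n => [//|n IH] H /=.
rewrite IH ?H // => i ilt; apply: H; exact: ltnW.
Qed.

Definition decode s (h : seq (set C)) := Dseq s (fun i => nth setT h i) (size h).

Lemma size_hist A (f : nat -> A) n : size (hist f n) = n.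
Proof. by rewrite /hist size_map size_iota. Qed.

Lemma nth_hist A (f : nat -> A) n i x0 : (i < n)%N -> nth x0 (hist f n) i = f i.
Proof. by move=> lt; rewrite /hist (nth_map 0%N) ?size_iota // nth_iota. Qed.

Lemma decode_hist s U n : decode s (hist U n) = Dseq s U n.
Proof.
rewrite /decode size_hist; apply: Dseq_ext => i ilt; exact: nth_hist.
Qed.

Definition sigma s (h : seq (set C)) : set (set C) :=
  [set W | exists P, legal_round s (decode s h) P /\ outc P = W].

Lemma kcov X s H : gm_valid X s ->
  k_cover X [set W | exists P, legal_round s H P /\ outc P = W].
Proof.
move=> sv.
have Kp : forall K : set C, K `<=` X -> compact K ->
    exists2 V, [set W | exists P, legal_round s H P /\ outc P = W] V & K `<=` V.
  move=> K KX cK.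
  have [P [sP lP cP]] := round_exists _ _ _ sv cK KX (gm_len s H) H.
  exists (outc P); first by exists P.
  move=> x Kx; apply/outcP => j jlt.
  by have [V VP Vx] := cP j jlt x Kx; exists V.
split=> //; split.
  move=> _ [P [[_ lP] <-]]; apply: outc_open => j jlt V VP.
  have [_ [oc _]] := sv (H ++ take j P).
  by apply: oc; apply: lP.
move=> x Xx.
have [V HV Vx] := Kp [set x] (fun y (e : [set x] y) => ltac:(by rewrite e)) ltac:(exact: compact_set1).
by exists V => //; apply: Vx.
Qed.

Section Main.
Variables (X : set C) (s : gm_strategy) (U : nat -> set C).
Hypothesis sv : gm_valid X s.
Hypothesis Uleg : forall n, sigma s (hist U n) (U n).

Let D := Dseq s U.
Let P n := pickP s (D n) (U n).

Lemma Ppick n : legal_round s (D n) (P n) /\ outc (P n) = U n.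
Proof.
apply: pickPP; have := Uleg n; rewrite /sigma /= decode_hist; exact.
Qed.

Lemma DS n : D n.+1 = D n ++ P n.
Proof. by []. Qed.

Lemma sizeDS n : size (D n.+1) = (size (D n) + gm_len s (D n))%N.
Proof. by rewrite DS size_cat (proj1 (proj1 (Ppick n))). Qed.

Lemma sizeD n : (n <= size (D n))%N.
Proof.
elim: n => [//|n IH]; rewrite sizeDS.
have [lp _] := sv (D n).
by rewrite -addn1 leq_add.
Qed.

Lemma Dprefix n k : exists t, D (n + k) = D n ++ t.
Proof.
elim: k => [|k [t IH]]; first by exists [::]; rewrite addn0 cats0.
by exists (t ++ P (n + k)); rewrite addnS DS IH catA.
Qed.

Lemma nthD n m i : (n <= m)%N -> (i < size (D n))%N -> nth [::] (D m) i = nth [::] (D n) i.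
Proof.
move=> nm il; rewrite -(subnKC nm); have [t ->] := Dprefix n (m - n).
by rewrite nth_cat il.
Qed.

Definition F i := nth [::] (D i.+1) i.

Lemma nthF m i : (i < size (D m))%N -> nth [::] (D m) i = F i.
Proof.
move=> il; rewrite /F.
have il1 : (i < size (D i.+1))%N by apply: leq_trans (sizeD i.+1).
rewrite -(nthD _ _ _ (leq_maxl m i.+1) il) -(nthD _ _ _ (leq_maxr m i.+1) il1) //.
Qed.

Lemma histF m k : (k <= size (D m))%N -> hist F k = take k (D m).
Proof.
move=> km; apply: (@eq_from_nth _ [::]).
  by rewrite size_hist size_take; case: ltngtP km => // ->.
move=> j; rewrite size_hist => jk.
rewrite nth_hist // nth_take // nthF //; exact: leq_trans jk km.
Qed.

Lemma gmL n : gm_L s F n = size (D n).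
Proof.
elim: n => [//|n IH] /=.
by rewrite IH sizeDS (histF _ _ (leqnn _)) take_size.
Qed.

Lemma Fround n j : (j < size (P n))%N ->
  F (size (D n) + j) = nth [::] (P n) j /\ hist F (size (D n) + j) = D n ++ take j (P n).
Proof.
move=> jl.
have il : (size (D n) + j < size (D n.+1))%N by rewrite DS size_cat ltn_add2l.
split.
  by rewrite -(nthF _ _ il) DS nth_cat ltnNge leq_addr /= addKn.
rewrite (histF _ _ (ltnW il)) DS take_cat ltnNge leq_addr /= addKn //.
Qed.

Lemma decomp m i : (i < size (D m))%N -> exists n j, i = (size (D n) + j)%N /\ (j < size (P n))%N.
Proof.
elim: m => [//|m IH] il.
case: (ltnP i (size (D m))) => [/IH //| ge].
exists m, (i - size (D m)); split; first by rewrite subnKC.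
by rewrite -(ltn_add2l (size (D m))) subnKC // -size_cat -DS.
Qed.

Lemma Flegal : gm_legal s F.
Proof.
move=> i V.
have [n [j [-> jl]]] := decomp i.+1 i (sizeD i.+1).
have [e1 e2] := Fround n j jl; rewrite e1 e2 => VP.
exact: (proj2 (proj1 (Ppick n))) j jl V VP.
Qed.

Lemma Fwins : X `<=` \bigcup_n U n -> gm_Bob_wins X s F.
Proof.
move=> Ucov x Xx.
have [n _ Unx] := Ucov x Xx.
exists n => //; rewrite !gmL => i /= /andP [l1 l2].
have jl : (i - size (D n) < size (P n))%N.
  by rewrite -(ltn_add2l (size (D n))) subnKC // -size_cat -DS.
have Ux : outc (P n) x by rewrite (proj2 (Ppick n)).
have [V VP Vx] := (proj1 (outcP _ _)) Ux _ jl.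
have [e1 _] := Fround n _ jl.
by rewrite -(subnKC l1) e1; exists V.
Qed.

End Main.

Theorem mainTheorem4 (Y : set cantor_space) :
  consonant Y -> ~ Alice_wins_grouped_Menger (~` Y).
Proof.
move=> cons [s [sv Hs]]; apply: cons.
exists (sigma s); split.
  by move=> h; apply: kcov.
move=> U Uleg Ucov.
exact: (Hs _ (Flegal _ _ _ sv Uleg) (Fwins _ _ _ sv Uleg Ucov)).
Qed.
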